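(* Let $\mathbb{H}^1_2$ be the complexified Heisenberg group. Then $\mathbb{R}^2$ factorizes $\mathbb{H}^1_2$ as a quotient: $\mathbb{R}^2$ is an h-quotient of $\mathbb{H}^1_2$, and every normal homogeneous subgroup $N$ of $\mathbb{H}^1_2$ such that $\mathbb{H}^1_2/N$ is h-isomorphic to $\mathbb{R}^2$ has a complementary homogeneous subgroup.
   Context: $\mathbb{H}^1_2$ is the connected simply connected Lie group whose Lie algebra $\mathfrak{h}^1_2$ has basis $R_0,R_1,R_2,R_3,Z_1,Z_2$ with the only nonzero brackets $[R_0,R_1]=[R_2,R_3]=Z_1$, $[R_0,R_2]=-[R_1,R_3]=Z_2$; it is stratified with first layer $\mathrm{span}\{R_0,\ldots,R_3\}$ and second layer $\mathrm{span}\{Z_1,Z_2\}$; dilations $\delta_r$ act by $r$ on the first layer and $r^2$ on the second. $\mathbb{R}^2$ is the graded group with one layer and dilations $v\mapsto rv$. h-homomorphism: group homomorphism commuting with dilations; h-isomorphism: invertible one. Homogeneous subgroup: closed connected simply connected Lie subgroup invariant under dilations. $\mathbb{R}^2$ is an h-quotient of $\mathbb{H}^1_2$ if $\mathbb{H}^1_2/N$ is h-isomorphic to $\mathbb{R}^2$ for some normal homogeneous subgroup $N$. Homogeneous subgroups $A,B$ are complementary if $AB=\mathbb{H}^1_2$ and $A\cap B=\{e\}$. *)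

(* Defs.v *)
From HB Require Import structures.
From mathcomp Require Import all_boot all_order all_algebra.
From mathcomp Require Import all_classical all_reals all_analysis.
Set Implicit Arguments. Unset Strict Implicit. Unset Printing Implicit Defensive.
Import Order.TTheory GRing.Theory Num.Theory.
Import numFieldNormedType.Exports.
Local Open Scope ring_scope.
Local Open Scope classical_set_scope.

(* The complexified Heisenberg group H^1_2 in exponential coordinates:
   a point is (x, z) with x = a0 R0 + a1 R1 + a2 R2 + a3 R3 (first layer)
   and z = z1 Z1 + z2 Z2 (second layer). Since the group has step 2,
   the BCH product is (x,z)*(x',z') = (x+x', z+z' + 1/2 [x,x']). *)
Notation Hpt R := ('rV[R]_4 * 'rV[R]_2)%type.

(* Lie bracket of two first-layer elements, expressed in the basis Z1, Z2:
   [R0,R1]=[R2,R3]=Z1, [R0,R2]=-[R1,R3]=Z2, all other brackets of basis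
   vectors (with i<j) are zero. *)
Definition hbracket (R : realType) (x y : 'rV[R]_4) : 'rV[R]_2 :=
  let a i := x ord0 (inord i) in
  let b i := y ord0 (inord i) in
  \row_(k < 2)
    if k == ord0 then (a 0 * b 1 - a 1 * b 0) + (a 2 * b 3 - a 3 * b 2)
    else (a 0 * b 2 - a 2 * b 0) - (a 1 * b 3 - a 3 * b 1).

Definition hmul (R : realType) (p q : Hpt R) : Hpt R :=
  (p.1 + q.1, p.2 + q.2 + 2^-1 *: hbracket p.1 q.1).
Definition hinv (R : realType) (p : Hpt R) : Hpt R := (- p.1, - p.2).
Definition he (R : realType) : Hpt R := (0, 0).
Definition hdil (R : realType) (r : R) (p : Hpt R) : Hpt R :=
  (r *: p.1, r ^+ 2 *: p.2).

(* Homogeneous subgroup: closed, connected subgroup invariant under all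
   dilations delta_r, r > 0.  (Closed subgroups are Lie subgroups, and
   connected subgroups of a simply connected nilpotent Lie group are simply
   connected.) *)
Definition homogeneous_subgroup (R : realType) (N : set (Hpt R)) : Prop :=
  [/\ closed N, connected N, N (he R),
      (forall p q, N p -> N q -> N (hmul p (hinv q)))
    & (forall r : R, 0 < r -> forall p, N p -> N (hdil r p))].

Definition normal_sub (R : realType) (N : set (Hpt R)) : Prop :=
  forall p n, N n -> N (hmul (hmul p n) (hinv p)).

Definition h_hom_R2 (R : realType) (phi : Hpt R -> 'rV[R]_2) : Prop :=
  (forall p q, phi (hmul p q) = phi p + phi q) /\
  (forall r : R, 0 < r -> forall p, phi (hdil r p) = r *: phi p).

(* H^1_2 / N is h-isomorphic to R^2, expressed via the first isomorphism
   theorem: a surjective h-homomorphism H^1_2 -> R^2 with kernel N. *)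
Definition h_quotient_R2 (R : realType) (N : set (Hpt R)) : Prop :=
  exists phi : Hpt R -> 'rV[R]_2,
    [/\ h_hom_R2 phi, (forall v, exists p, phi p = v)
      & (forall p, N p <-> phi p = 0)].

Definition complementary (R : realType) (A B : set (Hpt R)) : Prop :=
  (forall g, exists a b, [/\ A a, B b & g = hmul a b]) /\
  (forall g, A g -> B g -> g = he R).

(* Main.v *)
Require Import Defs.
From HB Require Import structures.
From mathcomp Require Import all_boot all_order all_algebra.
From mathcomp Require Import all_classical all_reals all_analysis.
Import numFieldNormedType.Exports.
From mathcomp Require Import ring lra.
Import Order.TTheory GRing.Theory Num.Theory.
Local Open Scope ring_scope.
Local Open Scope classical_set_scope.
Set Implicit Arguments. Unset Strict Implicit. Unset Printing Implicit Defensive.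


Section Basics.
Variable R : realType.

Definition i0 : 'I_4 := @Ordinal 4 0 isT.
Definition i1 : 'I_4 := @Ordinal 4 1 isT.
Definition i2 : 'I_4 := @Ordinal 4 2 isT.
Definition i3 : 'I_4 := @Ordinal 4 3 isT.
Definition k0 : 'I_2 := @Ordinal 2 0 isT.
Definition k1 : 'I_2 := @Ordinal 2 1 isT.

Definition mk4 (a b c d : R) : 'rV[R]_4 := \row_(j < 4) nth 0 [:: a; b; c; d] j.
Definition mk2 (a b : R) : 'rV[R]_2 := \row_(j < 2) nth 0 [:: a; b] j.

Lemma mk4E (x : 'rV[R]_4) : x = mk4 (x ord0 i0) (x ord0 i1) (x ord0 i2) (x ord0 i3).
Proof.
apply/rowP => j; rewrite !mxE; case: j => -[|[|[|[|j]]]] hj //=;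
by congr (x _ _); apply: val_inj.
Qed.

Lemma mk2E (x : 'rV[R]_2) : x = mk2 (x ord0 k0) (x ord0 k1).
Proof.
apply/rowP => j; rewrite !mxE; case: j => -[|[|j]] hj //=;
by congr (x _ _); apply: val_inj.
Qed.

Lemma mk4_0 a b c d : (mk4 a b c d) ord0 i0 = a. Proof. by rewrite mxE. Qed.
Lemma mk4_1 a b c d : (mk4 a b c d) ord0 i1 = b. Proof. by rewrite mxE. Qed.
Lemma mk4_2 a b c d : (mk4 a b c d) ord0 i2 = c. Proof. by rewrite mxE. Qed.
Lemma mk4_3 a b c d : (mk4 a b c d) ord0 i3 = d. Proof. by rewrite mxE. Qed.
Lemma mk2_0 a b : (mk2 a b) ord0 k0 = a. Proof. by rewrite mxE. Qed.
Lemma mk2_1 a b : (mk2 a b) ord0 k1 = b. Proof. by rewrite mxE. Qed.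

Lemma mk4D a b c d a' b' c' d' :
  mk4 a b c d + mk4 a' b' c' d' = mk4 (a + a') (b + b') (c + c') (d + d').
Proof. by apply/rowP => j; rewrite !mxE; case: j => -[|[|[|[|j]]]] hj. Qed.
Lemma mk2D a b a' b' : mk2 a b + mk2 a' b' = mk2 (a + a') (b + b').
Proof. by apply/rowP => j; rewrite !mxE; case: j => -[|[|j]] hj. Qed.
Lemma mk4N a b c d : - mk4 a b c d = mk4 (- a) (- b) (- c) (- d).
Proof. by apply/rowP => j; rewrite !mxE; case: j => -[|[|[|[|j]]]] hj //=; rewrite oppr0. Qed.
Lemma mk2N a b : - mk2 a b = mk2 (- a) (- b).
Proof. by apply/rowP => j; rewrite !mxE; case: j => -[|[|j]] hj //=; rewrite oppr0. Qed.
Lemma mk4Z r a b c d : r *: mk4 a b c d = mk4 (r * a) (r * b) (r * c) (r * d).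
Proof. by apply/rowP => j; rewrite !mxE; case: j => -[|[|[|[|j]]]] hj //=; rewrite mulr0. Qed.
Lemma mk2Z r a b : r *: mk2 a b = mk2 (r * a) (r * b).
Proof. by apply/rowP => j; rewrite !mxE; case: j => -[|[|j]] hj //=; rewrite mulr0. Qed.
Lemma mk4_zero : (0 : 'rV[R]_4) = mk4 0 0 0 0.
Proof. by apply/rowP => j; rewrite !mxE; case: j => -[|[|[|[|j]]]] hj. Qed.
Lemma mk2_zero : (0 : 'rV[R]_2) = mk2 0 0.
Proof. by apply/rowP => j; rewrite !mxE; case: j => -[|[|j]] hj. Qed.

Lemma mk2_inj a b c d : mk2 a b = mk2 c d -> a = c /\ b = d.
Proof.
move=> h; split; [have := congr1 (fun v : 'rV[R]_2 => v ord0 k0) h | have := congr1 (fun v : 'rV[R]_2 => v ord0 k1) h];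
by rewrite !mxE.
Qed.
Lemma mk4_inj a b c d a' b' c' d' : mk4 a b c d = mk4 a' b' c' d' ->
  [/\ a = a', b = b', c = c' & d = d'].
Proof.
move=> h; split; [have := congr1 (fun v : 'rV[R]_4 => v ord0 i0) h | have := congr1 (fun v : 'rV[R]_4 => v ord0 i1) h
  | have := congr1 (fun v : 'rV[R]_4 => v ord0 i2) h | have := congr1 (fun v : 'rV[R]_4 => v ord0 i3) h];
by rewrite !mxE.
Qed.

Definition B1 (a0 a1 a2 a3 b0 b1 b2 b3 : R) := (a0 * b1 - a1 * b0) + (a2 * b3 - a3 * b2).
Definition B2 (a0 a1 a2 a3 b0 b1 b2 b3 : R) := (a0 * b2 - a2 * b0) - (a1 * b3 - a3 * b1).

Lemma hbracketE a0 a1 a2 a3 b0 b1 b2 b3 :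
  hbracket (mk4 a0 a1 a2 a3) (mk4 b0 b1 b2 b3) =
  mk2 (B1 a0 a1 a2 a3 b0 b1 b2 b3) (B2 a0 a1 a2 a3 b0 b1 b2 b3).
Proof.
apply/rowP => j; rewrite /hbracket !mxE.
have e0 : (inord 0 : 'I_4) = i0 by apply: val_inj; rewrite /= inordK.
have e1 : (inord 1 : 'I_4) = i1 by apply: val_inj; rewrite /= inordK.
have e2 : (inord 2 : 'I_4) = i2 by apply: val_inj; rewrite /= inordK.
have e3 : (inord 3 : 'I_4) = i3 by apply: val_inj; rewrite /= inordK.
rewrite e0 e1 e2 e3 /=.
by case: j => -[|[|j]] hj.
Qed.

Lemma hpt_ind (P : Hpt R -> Prop) :
  (forall a0 a1 a2 a3 z0 z1, P (mk4 a0 a1 a2 a3, mk2 z0 z1)) -> forall p, P p.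
Proof. by move=> H [x z]; rewrite (mk4E x) (mk2E z). Qed.

Lemma hmulE a0 a1 a2 a3 z0 z1 b0 b1 b2 b3 w0 w1 :
  hmul (mk4 a0 a1 a2 a3, mk2 z0 z1) (mk4 b0 b1 b2 b3, mk2 w0 w1) =
  (mk4 (a0 + b0) (a1 + b1) (a2 + b2) (a3 + b3),
   mk2 (z0 + w0 + 2^-1 * B1 a0 a1 a2 a3 b0 b1 b2 b3)
       (z1 + w1 + 2^-1 * B2 a0 a1 a2 a3 b0 b1 b2 b3)).
Proof. by rewrite /hmul /= hbracketE mk4D mk2Z !mk2D. Qed.

Lemma hinvE a0 a1 a2 a3 z0 z1 :
  hinv (mk4 a0 a1 a2 a3, mk2 z0 z1) = (mk4 (-a0) (-a1) (-a2) (-a3), mk2 (-z0) (-z1)).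
Proof. by rewrite /hinv /= mk4N mk2N. Qed.

Lemma hdilE r a0 a1 a2 a3 z0 z1 :
  hdil r (mk4 a0 a1 a2 a3, mk2 z0 z1) =
  (mk4 (r * a0) (r * a1) (r * a2) (r * a3), mk2 (r ^+ 2 * z0) (r ^+ 2 * z1)).
Proof. by rewrite /hdil /= mk4Z mk2Z. Qed.

Lemma heE : he R = (mk4 0 0 0 0, mk2 0 0).
Proof. by rewrite /he -mk4_zero -mk2_zero. Qed.

End Basics.


Section Topo.
Variable R : realType.

Lemma cont_c1 (i : 'I_4) : continuous (fun p : Hpt R => p.1 ord0 i).
Proof.
move=> p; apply: (@continuous_comp _ _ _ fst (fun M : 'rV[R]_4 => M ord0 i)); last exact: coord_continuous.
exact: cvg_fst.
Qed.
Lemma cont_c2 (i : 'I_2) : continuous (fun p : Hpt R => p.2 ord0 i).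
Proof.
move=> p; apply: (@continuous_comp _ _ _ snd (fun M : 'rV[R]_2 => M ord0 i)); last exact: coord_continuous.
exact: cvg_snd.
Qed.

Definition lin4 (c0 c1 c2 c3 : R) (w : 'rV[R]_4) :=
  w ord0 i0 * c0 + w ord0 i1 * c1 + w ord0 i2 * c2 + w ord0 i3 * c3.

Lemma cont_lin4 c0 c1 c2 c3 : continuous (fun p : Hpt R => lin4 c0 c1 c2 c3 p.1).
Proof.
move=> p; rewrite /lin4.
apply: cvgD; [apply: cvgD; [apply: cvgD|]|];
  apply: cvgM; (exact: cont_c1 || exact: cvg_cst).
Qed.

Lemma closed_eqf (f g : Hpt R -> R) : continuous f -> continuous g ->
  closed [set p | f p = g p].
Proof.
move=> cf cg.
have -> : [set p | f p = g p] = (fun p => f p - g p) @^-1` [set x | x = 0].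
  by apply/seteqP; split => p /=; [move=> ->; rewrite subrr | move/eqP; rewrite subr_eq0 => /eqP].
have : continuous (fun p => f p - g p).
  by move=> p; apply: cvgB; [exact: cf | exact: cg].
by move/continuous_closedP; apply; exact: closed_eq.
Qed.

Lemma connected_R : connected [set: R].
Proof. by apply/connected_intervalP => x y _ _ z _. Qed.

Lemma star_connected (S : set (Hpt R)) :
  S (he R) ->
  (forall p r, S p -> S (r *: p.1, r *: p.2)) -> connected S.
Proof.
move=> S0 Sr.
pose line (p : Hpt R) := (fun r : R => (r *: p.1, r *: p.2)) @` [set: R].
have -> : S = \bigcup_(p in S) line p.
  apply/seteqP; split => [p Sp|q [p Sp [r _ <-]]]; last exact: Sr.
  by exists p => //; exists 1 => //; rewrite !scale1r; case: p {Sp}.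
apply: bigcup_connected.
  exists (he R) => p Sp; exists 0 => //; by rewrite !scale0r.
move=> p _; apply: connected_continuous_connected; first exact: connected_R.
move=> r; apply: continuous_subspaceT => {}r.
have h1 : (fun r0 : R => r0 *: p.1) @ r --> r *: p.1.
  by apply: continuousZr_tmp; exact: cvg_id.
have h2 : (fun r0 : R => r0 *: p.2) @ r --> r *: p.2.
  by apply: continuousZr_tmp; exact: cvg_id.
exact: (cvg_pair h1 h2).
Qed.

End Topo.


Ltac hsimp := rewrite ?hinvE ?hmulE ?hdilE ?heE /= ?mk4_0 ?mk4_1 ?mk4_2 ?mk4_3 ?mk2_0 ?mk2_1.

Section Part1.
Variable R : realType.

Definition N0 : set (Hpt R) := [set p : Hpt R | p.1 ord0 i0 = 0 /\ p.1 ord0 i1 = 0].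
Definition phi0 (p : Hpt R) : 'rV[R]_2 := mk2 (p.1 ord0 i0) (p.1 ord0 i1).

Lemma part1 : exists N : set (Hpt R),
      [/\ homogeneous_subgroup N, normal_sub N & h_quotient_R2 N].
Proof.
exists N0; split.
- split.
  + apply: closedI; apply: closed_eqf; (exact: cont_c1 || exact: cst_continuous).
  + apply: star_connected; first by rewrite /N0 heE /= !mxE.
    by move=> p r [h0 h1]; rewrite /N0 /= !mxE h0 h1 mulr0.
  + by rewrite /N0 heE /= !mxE.
  + move=> p q; elim/hpt_ind: p; move=> a0 a1 a2 a3 z0 z1; elim/hpt_ind: q => b0 b1 b2 b3 w0 w1.
    rewrite /N0; hsimp => -[-> ->] [-> ->]; split; ring.
  + move=> r _ p; elim/hpt_ind: p => a0 a1 a2 a3 z0 z1; rewrite /N0; hsimp => -[-> ->]; split; ring.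
- move=> p n; elim/hpt_ind: p => a0 a1 a2 a3 z0 z1; elim/hpt_ind: n => b0 b1 b2 b3 w0 w1.
  rewrite /N0; hsimp => -[-> ->]; split; ring.
- exists phi0; split.
  + split.
    * move=> p q; elim/hpt_ind: p => a0 a1 a2 a3 z0 z1; elim/hpt_ind: q => b0 b1 b2 b3 w0 w1.
      by rewrite /phi0; hsimp; rewrite mk2D.
    * move=> r _ p; elim/hpt_ind: p => a0 a1 a2 a3 z0 z1.
      by rewrite /phi0; hsimp; rewrite mk2Z.
  + move=> v; exists (mk4 (v ord0 k0) (v ord0 k1) 0 0, 0).
    by rewrite /phi0; hsimp; rewrite -mk2E.
  + move=> p; rewrite /N0 /phi0 mk2_zero; split => [[-> ->] //|].
    by case/mk2_inj.
Qed.

Lemma hmul_invK (g b : Hpt R) : hmul (hmul g (hinv b)) b = g.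
Proof.
elim/hpt_ind: g => a0 a1 a2 a3 z0 z1; elim/hpt_ind: b => b0 b1 b2 b3 w0 w1.
hsimp; rewrite /B1 /B2; congr (mk4 _ _ _ _, mk2 _ _); ring.
Qed.

End Part1.




Section Phi.
Variable R : realType.
Variable phi : Hpt R -> 'rV[R]_2.
Hypothesis hom : h_hom_R2 phi.

Let f0 p := phi p ord0 k0.
Let f1 p := phi p ord0 k1.

Lemma phiE p : phi p = mk2 (f0 p) (f1 p).
Proof. exact: mk2E. Qed.

Lemma fM p q : f0 (hmul p q) = f0 p + f0 q /\ f1 (hmul p q) = f1 p + f1 q.
Proof. by have := hom.1 p q; rewrite !phiE mk2D => /mk2_inj. Qed.

Lemma fD r p : 0 < r -> f0 (hdil r p) = r * f0 p /\ f1 (hdil r p) = r * f1 p.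
Proof. by move=> r0; have := hom.2 r r0 p; rewrite !phiE mk2Z => /mk2_inj. Qed.

Ltac hring := hsimp; rewrite /B1 /B2; congr (mk4 _ _ _ _, mk2 _ _); ring.

Lemma f_he : f0 (he R) = 0 /\ f1 (he R) = 0.
Proof.
have e : hmul (he R) (he R) = he R by rewrite heE; hring.
have [h0 h1] := fM (he R) (he R); rewrite e in h0 h1; split; lra.
Qed.

Lemma f_z z0 z1 : f0 (mk4 0 0 0 0, mk2 z0 z1) = 0 /\ f1 (mk4 0 0 0 0, mk2 z0 z1) = 0.
Proof.
set q := (mk4 0 0 0 0, mk2 z0 z1).
have e : hdil 2 q = hmul (hmul q q) (hmul q q) by rewrite /q; hring.
have [d0 d1] := fD q (ltr0Sn _ 1).
have [m0 m1] := fM (hmul q q) (hmul q q).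
have [n0 n1] := fM q q.
rewrite e m0 m1 n0 n1 in d0 d1; split; lra.
Qed.

Let l0 a0 a1 a2 a3 := f0 (mk4 a0 a1 a2 a3, mk2 0 0).
Let l1 a0 a1 a2 a3 := f1 (mk4 a0 a1 a2 a3, mk2 0 0).

Lemma f_split a0 a1 a2 a3 z0 z1 :
  f0 (mk4 a0 a1 a2 a3, mk2 z0 z1) = l0 a0 a1 a2 a3 /\
  f1 (mk4 a0 a1 a2 a3, mk2 z0 z1) = l1 a0 a1 a2 a3.
Proof.
have e : (mk4 a0 a1 a2 a3, mk2 z0 z1) =
   hmul (mk4 a0 a1 a2 a3, mk2 0 0) (mk4 0 0 0 0, mk2 z0 z1) by hring.
have [m0 m1] := fM (mk4 a0 a1 a2 a3, mk2 0 0) (mk4 0 0 0 0, mk2 z0 z1).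
have [z0' z1'] := f_z z0 z1.
by rewrite e m0 m1 z0' z1' !addr0.
Qed.

Lemma l_add a0 a1 a2 a3 b0 b1 b2 b3 :
  l0 (a0 + b0) (a1 + b1) (a2 + b2) (a3 + b3) = l0 a0 a1 a2 a3 + l0 b0 b1 b2 b3 /\
  l1 (a0 + b0) (a1 + b1) (a2 + b2) (a3 + b3) = l1 a0 a1 a2 a3 + l1 b0 b1 b2 b3.
Proof.
have [m0 m1] := fM (mk4 a0 a1 a2 a3, mk2 0 0) (mk4 b0 b1 b2 b3, mk2 0 0).
move: m0 m1; hsimp => m0 m1.
have [s0 s1] := f_split (a0 + b0) (a1 + b1) (a2 + b2) (a3 + b3)
  (0 + 0 + 2^-1 * B1 a0 a1 a2 a3 b0 b1 b2 b3) (0 + 0 + 2^-1 * B2 a0 a1 a2 a3 b0 b1 b2 b3).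
by rewrite -s0 -s1 m0 m1.
Qed.

Lemma l_zero : l0 0 0 0 0 = 0 /\ l1 0 0 0 0 = 0.
Proof. by have := f_he; rewrite heE. Qed.

Lemma l_pos r a0 a1 a2 a3 : 0 < r ->
  l0 (r * a0) (r * a1) (r * a2) (r * a3) = r * l0 a0 a1 a2 a3 /\
  l1 (r * a0) (r * a1) (r * a2) (r * a3) = r * l1 a0 a1 a2 a3.
Proof.
move=> r0; have [d0 d1] := fD (mk4 a0 a1 a2 a3, mk2 0 0) r0.
move: d0 d1; hsimp; rewrite !mulr0 => d0 d1.
by rewrite /l0 /l1 d0 d1.
Qed.

Lemma l_scale r a0 a1 a2 a3 :
  l0 (r * a0) (r * a1) (r * a2) (r * a3) = r * l0 a0 a1 a2 a3 /\
  l1 (r * a0) (r * a1) (r * a2) (r * a3) = r * l1 a0 a1 a2 a3.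
Proof.
have [r0|r0|->] := ltrgtP r 0; last first.
- by rewrite !mul0r; have [-> ->] := l_zero.
- exact: l_pos.
have nr : 0 < - r by rewrite oppr_gt0.
have [p0 p1] := l_pos a0 a1 a2 a3 nr.
have [s0 s1] := l_add (r * a0) (r * a1) (r * a2) (r * a3) (- r * a0) (- r * a1) (- r * a2) (- r * a3).
have [z0 z1] := l_zero.
have e : forall a, r * a + - r * a = 0 by move=> a; ring.
rewrite !e z0 z1 !mulNr in s0 s1.
rewrite !mulNr in p0 p1.
split; lra.
Qed.

Lemma phi_formula : exists A0 A1 A2 A3 B0 B1 B2 B3 : R, forall p,
  phi p = mk2 (lin4 A0 A1 A2 A3 p.1) (lin4 B0 B1 B2 B3 p.1).
Proof.
exists (l0 1 0 0 0), (l0 0 1 0 0), (l0 0 0 1 0), (l0 0 0 0 1).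
exists (l1 1 0 0 0), (l1 0 1 0 0), (l1 0 0 1 0), (l1 0 0 0 1).
elim/hpt_ind => a0 a1 a2 a3 z0 z1.
rewrite phiE; have [-> ->] := f_split a0 a1 a2 a3 z0 z1.
rewrite /lin4 /= !mk4_0 !mk4_1 !mk4_2 !mk4_3.
have E : forall (g : R -> R -> R -> R -> R),
  (forall a0 a1 a2 a3 b0 b1 b2 b3, g (a0 + b0) (a1 + b1) (a2 + b2) (a3 + b3) = g a0 a1 a2 a3 + g b0 b1 b2 b3) ->
  (forall r a0 a1 a2 a3, g (r * a0) (r * a1) (r * a2) (r * a3) = r * g a0 a1 a2 a3) ->
  g a0 a1 a2 a3 = a0 * g 1 0 0 0 + a1 * g 0 1 0 0 + a2 * g 0 0 1 0 + a3 * g 0 0 0 1.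
  move=> g gD gZ.
  have -> : g a0 a1 a2 a3 = g (a0 * 1 + (a1 * 0 + (a2 * 0 + a3 * 0))) (a0 * 0 + (a1 * 1 + (a2 * 0 + a3 * 0)))
      (a0 * 0 + (a1 * 0 + (a2 * 1 + a3 * 0))) (a0 * 0 + (a1 * 0 + (a2 * 0 + a3 * 1))).
    by congr g; ring.
  by rewrite !gD !gZ addrA addrA.
rewrite (E l0); last 2 first.
- by move=> b0 b1 b2 b3 c0 c1 c2 c3; exact: (l_add b0 b1 b2 b3 c0 c1 c2 c3).1.
- by move=> r b0 b1 b2 b3; exact: (l_scale r b0 b1 b2 b3).1.
rewrite (E l1) //.
- by move=> b0 b1 b2 b3 c0 c1 c2 c3; exact: (l_add b0 b1 b2 b3 c0 c1 c2 c3).2.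
- by move=> r b0 b1 b2 b3; exact: (l_scale r b0 b1 b2 b3).2.
Qed.

End Phi.




Section Part2.
Variable R : realType.
Variables A0 A1 A2 A3 B0 B1' B2' B3 u0 u1 u2 u3 : R.

Let v0 : R := - u3. Let v1 : R := - u2. Let v2 : R := u1. Let v3 : R := u0.
Let al0 : R := u0 * A0 + u1 * A1 + u2 * A2 + u3 * A3.
Let al1 : R := u0 * B0 + u1 * B1' + u2 * B2' + u3 * B3.
Let be0 : R := v0 * A0 + v1 * A1 + v2 * A2 + v3 * A3.
Let be1 : R := v0 * B0 + v1 * B1' + v2 * B2' + v3 * B3.
Let D : R := al0 * be1 - al1 * be0.
Hypothesis hD : D != 0.

Let cS0 : R := (A0 * be1 - B0 * be0) / D.
Let cS1 : R := (A1 * be1 - B1' * be0) / D.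
Let cS2 : R := (A2 * be1 - B2' * be0) / D.
Let cS3 : R := (A3 * be1 - B3 * be0) / D.
Let cT0 : R := (al0 * B0 - al1 * A0) / D.
Let cT1 : R := (al0 * B1' - al1 * A1) / D.
Let cT2 : R := (al0 * B2' - al1 * A2) / D.
Let cT3 : R := (al0 * B3 - al1 * A3) / D.

Let Pc (ui vi : R) (w : 'rV[R]_4) :=
  lin4 (cS0 * ui + cT0 * vi) (cS1 * ui + cT1 * vi) (cS2 * ui + cT2 * vi) (cS3 * ui + cT3 * vi) w.

Definition Mc : set (Hpt R) := [set p : Hpt R |
  p.2 ord0 k0 = 0 /\ p.2 ord0 k1 = 0 /\ p.1 ord0 i0 = Pc u0 v0 p.1 /\
  p.1 ord0 i1 = Pc u1 v1 p.1 /\ p.1 ord0 i2 = Pc u2 v2 p.1 /\ p.1 ord0 i3 = Pc u3 v3 p.1].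

Lemma Pc_split ui vi a0 a1 a2 a3 : Pc ui vi (mk4 a0 a1 a2 a3) =
  lin4 cS0 cS1 cS2 cS3 (mk4 a0 a1 a2 a3) * ui + lin4 cT0 cT1 cT2 cT3 (mk4 a0 a1 a2 a3) * vi.
Proof. rewrite /Pc /lin4 !mk4_0 !mk4_1 !mk4_2 !mk4_3; ring. Qed.

Lemma KS s t : lin4 cS0 cS1 cS2 cS3
  (mk4 (s * u0 + t * v0) (s * u1 + t * v1) (s * u2 + t * v2) (s * u3 + t * v3)) = s.
Proof.
rewrite /lin4 !mk4_0 !mk4_1 !mk4_2 !mk4_3.
have e : forall X, X / D = X * D^-1 by [].
rewrite /cS0 /cS1 /cS2 /cS3 !e.
have -> : forall a b c d, (s * u0 + t * v0) * (a * D^-1) + (s * u1 + t * v1) * (b * D^-1) + (s * u2 + t * v2) * (c * D^-1) + (s * u3 + t * v3) * (d * D^-1)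
   = ((s * u0 + t * v0) * a + (s * u1 + t * v1) * b + (s * u2 + t * v2) * c + (s * u3 + t * v3) * d) * D^-1.
  by move=> *; ring.
apply: (canLR (mulfK hD)).
rewrite /D /al0 /al1 /be0 /be1; ring.
Qed.

Lemma KT s t : lin4 cT0 cT1 cT2 cT3
  (mk4 (s * u0 + t * v0) (s * u1 + t * v1) (s * u2 + t * v2) (s * u3 + t * v3)) = t.
Proof.
rewrite /lin4 !mk4_0 !mk4_1 !mk4_2 !mk4_3.
have e : forall X, X / D = X * D^-1 by [].
rewrite /cT0 /cT1 /cT2 /cT3 !e.
have -> : forall a b c d, (s * u0 + t * v0) * (a * D^-1) + (s * u1 + t * v1) * (b * D^-1) + (s * u2 + t * v2) * (c * D^-1) + (s * u3 + t * v3) * (d * D^-1)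
   = ((s * u0 + t * v0) * a + (s * u1 + t * v1) * b + (s * u2 + t * v2) * c + (s * u3 + t * v3) * d) * D^-1.
  by move=> *; ring.
apply: (canLR (mulfK hD)).
rewrite /D /al0 /al1 /be0 /be1; ring.
Qed.

Definition span4 (a0 a1 a2 a3 : R) := exists s t,
  [/\ a0 = s * u0 + t * v0, a1 = s * u1 + t * v1, a2 = s * u2 + t * v2 & a3 = s * u3 + t * v3].

Lemma Mc_span a0 a1 a2 a3 z0 z1 :
  Mc (mk4 a0 a1 a2 a3, mk2 z0 z1) <-> [/\ z0 = 0, z1 = 0 & span4 a0 a1 a2 a3].
Proof.
rewrite /Mc /=; hsimp; rewrite !Pc_split; split.
- move=> [-> [-> [h0 [h1 [h2 h3]]]]]; split => //.
  by do 2 eexists; split; eassumption.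
- move=> [-> -> [s [t [-> -> -> ->]]]].
  by rewrite KS KT.
Qed.

Lemma span_sub a0 a1 a2 a3 b0 b1 b2 b3 : span4 a0 a1 a2 a3 -> span4 b0 b1 b2 b3 ->
  span4 (a0 - b0) (a1 - b1) (a2 - b2) (a3 - b3) /\
  B1 a0 a1 a2 a3 b0 b1 b2 b3 = 0 /\ B2 a0 a1 a2 a3 b0 b1 b2 b3 = 0.
Proof.
move=> [s [t [-> -> -> ->]]] [s' [t' [-> -> -> ->]]]; split.
  by exists (s - s'), (t - t'); split; ring.
by rewrite /B1 /B2 /v0 /v1 /v2 /v3; split; ring.
Qed.

Lemma span_scale r a0 a1 a2 a3 : span4 a0 a1 a2 a3 ->
  span4 (r * a0) (r * a1) (r * a2) (r * a3).
Proof. by move=> [s [t [-> -> -> ->]]]; exists (r * s), (r * t); split; ring. Qed.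

Lemma Mc_homogeneous : homogeneous_subgroup Mc.
Proof.
split.
- rewrite /Mc; repeat apply: closedI; apply: closed_eqf;
    (exact: cont_c2 || exact: cst_continuous || exact: cont_c1 || exact: cont_lin4).
- apply: star_connected.
    rewrite heE; apply/Mc_span; split => //; exists 0, 0; split; ring.
  elim/hpt_ind => a0 a1 a2 a3 z0 z1 r /Mc_span [-> -> sp].
  rewrite /= mk4Z mk2Z; apply/Mc_span; split; [ring|ring|exact: span_scale].
- rewrite heE; apply/Mc_span; split => //; exists 0, 0; split; ring.
- elim/hpt_ind => a0 a1 a2 a3 z0 z1; elim/hpt_ind => b0 b1 b2 b3 w0 w1.
  move=> /Mc_span [-> -> spa] /Mc_span [-> -> spb].
  have [sp [h1 h2]] := span_sub spa spb.
  have e1 : B1 a0 a1 a2 a3 (- b0) (- b1) (- b2) (- b3) = - B1 a0 a1 a2 a3 b0 b1 b2 b3 by rewrite /B1; ring.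
  have e2 : B2 a0 a1 a2 a3 (- b0) (- b1) (- b2) (- b3) = - B2 a0 a1 a2 a3 b0 b1 b2 b3 by rewrite /B2; ring.
  hsimp; rewrite e1 e2 h1 h2; apply/Mc_span; split; [ring|ring|exact: sp].
- move=> r _; elim/hpt_ind => a0 a1 a2 a3 z0 z1 /Mc_span [-> -> sp].
  hsimp; apply/Mc_span; split; [ring|ring|exact: span_scale].
Qed.

Lemma Mc_complementary (N : set (Hpt R)) :
  (forall p, N p <-> lin4 A0 A1 A2 A3 p.1 = 0 /\ lin4 B0 B1' B2' B3 p.1 = 0) ->
  complementary N Mc.
Proof.
move=> HN; split.
- elim/hpt_ind => a0 a1 a2 a3 z0 z1.
  set s := lin4 cS0 cS1 cS2 cS3 (mk4 a0 a1 a2 a3).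
  set t := lin4 cT0 cT1 cT2 cT3 (mk4 a0 a1 a2 a3).
  set b : Hpt R := (mk4 (s * u0 + t * v0) (s * u1 + t * v1) (s * u2 + t * v2) (s * u3 + t * v3), mk2 0 0).
  exists (hmul (mk4 a0 a1 a2 a3, mk2 z0 z1) (hinv b)), b; split.
  + apply/HN; rewrite /b; hsimp; rewrite /lin4 !mk4_0 !mk4_1 !mk4_2 !mk4_3.
    rewrite /s /t /lin4 !mk4_0 !mk4_1 !mk4_2 !mk4_3.
    rewrite /cS0 /cS1 /cS2 /cS3 /cT0 /cT1 /cT2 /cT3.
    have hdi : D^-1 * D = 1 := mulVf hD.
    move: (D^-1) hdi => di.
    rewrite /D /al0 /al1 /be0 /be1 /v0 /v1 /v2 /v3 => hdi.
    split.
    * match type of hdi with di * ?Dx = 1 =>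
        transitivity ((a0 * A0 + a1 * A1 + a2 * A2 + a3 * A3) * (1 - di * Dx)) end.
        ring.
      by rewrite hdi subrr mulr0.
    * match type of hdi with di * ?Dx = 1 =>
        transitivity ((a0 * B0 + a1 * B1' + a2 * B2' + a3 * B3) * (1 - di * Dx)) end.
        ring.
      by rewrite hdi subrr mulr0.
  + apply/Mc_span; split => //; by exists s, t.
  + by rewrite hmul_invK.
- elim/hpt_ind => a0 a1 a2 a3 z0 z1 /HN [].
  move=> h0 h1 /Mc_span [-> -> [s [t [ea0 ea1 ea2 ea3]]]].
  move: h0 h1; rewrite /= /lin4 !mk4_0 !mk4_1 !mk4_2 !mk4_3 ea0 ea1 ea2 ea3 => h0 h1.
  have hs : s * D = 0.
    have -> : s * D = (((s * u0 + t * v0) * A0 + (s * u1 + t * v1) * A1 + (s * u2 + t * v2) * A2 + (s * u3 + t * v3) * A3) * be1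
        - ((s * u0 + t * v0) * B0 + (s * u1 + t * v1) * B1' + (s * u2 + t * v2) * B2' + (s * u3 + t * v3) * B3) * be0).
      by rewrite /D /al0 /al1 /be0 /be1 /v0 /v1 /v2 /v3; ring.
    by rewrite h0 h1 !mul0r subrr.
  have ht : t * D = 0.
    have -> : t * D = (al0 * ((s * u0 + t * v0) * B0 + (s * u1 + t * v1) * B1' + (s * u2 + t * v2) * B2' + (s * u3 + t * v3) * B3)
        - al1 * ((s * u0 + t * v0) * A0 + (s * u1 + t * v1) * A1 + (s * u2 + t * v2) * A2 + (s * u3 + t * v3) * A3)).
      by rewrite /D /al0 /al1 /be0 /be1 /v0 /v1 /v2 /v3; ring.
    by rewrite h0 h1 !mulr0 subrr.
  move/eqP: hs; rewrite mulf_eq0 (negbTE hD) orbF => /eqP s0.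
  move/eqP: ht; rewrite mulf_eq0 (negbTE hD) orbF => /eqP t0.
  rewrite heE s0 t0; congr (mk4 _ _ _ _, _); ring.
Qed.

End Part2.


Section Main.
Variable R : realType.

Definition Dq (A0 A1 A2 A3 B0 B1' B2' B3 u0 u1 u2 u3 : R) :=
(u0 * A0 + u1 * A1 + u2 * A2 + u3 * A3) *
(- u3 * B0 + - u2 * B1' + u1 * B2' + u0 * B3) -
(u0 * B0 + u1 * B1' + u2 * B2' + u3 * B3) *
(- u3 * A0 + - u2 * A1 + u1 * A2 + u0 * A3).

Lemma exists_u (A0 A1 A2 A3 B0 B1' B2' B3 x0 x1 x2 x3 y0 y1 y2 y3 : R) :
  x0 * A0 + x1 * A1 + x2 * A2 + x3 * A3 = 1 ->
  x0 * B0 + x1 * B1' + x2 * B2' + x3 * B3 = 0 ->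
  y0 * A0 + y1 * A1 + y2 * A2 + y3 * A3 = 0 ->
  y0 * B0 + y1 * B1' + y2 * B2' + y3 * B3 = 1 ->
  exists u0 u1 u2 u3, Dq A0 A1 A2 A3 B0 B1' B2' B3 u0 u1 u2 u3 != 0.
Proof.
move=> hxA hxB hyA hyB.
have [H1|] := eqVneq (Dq A0 A1 A2 A3 B0 B1' B2' B3 1 0 0 0) 0; last by eauto.
have [H2|] := eqVneq (Dq A0 A1 A2 A3 B0 B1' B2' B3 0 1 0 0) 0; last by eauto.
have [H3|] := eqVneq (Dq A0 A1 A2 A3 B0 B1' B2' B3 1 1 0 0) 0; last by eauto.
have [H4|] := eqVneq (Dq A0 A1 A2 A3 B0 B1' B2' B3 1 0 1 0) 0; last by eauto.
exfalso.
have h03 : A0 * B3 - A3 * B0 = 0 by rewrite -H1 /Dq; ring.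
have h12 : A1 * B2' - A2 * B1' = 0 by rewrite -H2 /Dq; ring.
have h3 : (A0 * B2' - A2 * B0) + (A0 * B3 - A3 * B0) + (A1 * B2' - A2 * B1') + (A1 * B3 - A3 * B1') = 0
  by rewrite -H3 /Dq; ring.
have h4 : (A0 * B3 - A3 * B0) - (A0 * B1' - A1 * B0) + (A2 * B3 - A3 * B2') + (A1 * B2' - A2 * B1') = 0
  by rewrite -H4 /Dq; ring.
have pl : (A0 * B1' - A1 * B0) * (A2 * B3 - A3 * B2') - (A0 * B2' - A2 * B0) * (A1 * B3 - A3 * B1')
   + (A0 * B3 - A3 * B0) * (A1 * B2' - A2 * B1') = 0 by ring.
have hdet : 1 = (x0 * y1 - x1 * y0) * (A0 * B1' - A1 * B0) + (x0 * y2 - x2 * y0) * (A0 * B2' - A2 * B0)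
  + (x0 * y3 - x3 * y0) * (A0 * B3 - A3 * B0) + (x1 * y2 - x2 * y1) * (A1 * B2' - A2 * B1')
  + (x1 * y3 - x3 * y1) * (A1 * B3 - A3 * B1') + (x2 * y3 - x3 * y2) * (A2 * B3 - A3 * B2').
  transitivity ((x0 * A0 + x1 * A1 + x2 * A2 + x3 * A3) * (y0 * B0 + y1 * B1' + y2 * B2' + y3 * B3)
    - (x0 * B0 + x1 * B1' + x2 * B2' + x3 * B3) * (y0 * A0 + y1 * A1 + y2 * A2 + y3 * A3)).
    by rewrite hxA hyB hxB hyA; ring.
  ring.
move: hdet pl h03 h12 h3 h4.
move: (A0 * B1' - A1 * B0) => p01; move: (A0 * B2' - A2 * B0) => p02.
move: (A0 * B3 - A3 * B0) => p03; move: (A1 * B2' - A2 * B1') => p12.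
move: (A1 * B3 - A3 * B1') => p13; move: (A2 * B3 - A3 * B2') => p23.
move=> hdet pl h03 h12 h3 h4.
rewrite h03 h12 in h3 h4 pl hdet.
have e23 : p23 = p01 by lra.
have e13 : p13 = - p02 by lra.
rewrite e23 e13 in pl hdet.
have sq : p01 * p01 + p02 * p02 = 0 by rewrite -pl; ring.
have z1 : p01 = 0 by nra.
have z2 : p02 = 0 by nra.
move: hdet; rewrite z1 z2; lra.
Qed.



End Main.

Theorem proposition11p22 (R : realType) :
  (exists N : set (Hpt R),
      [/\ homogeneous_subgroup N, normal_sub N & h_quotient_R2 N]) /\
  (forall N : set (Hpt R),
      homogeneous_subgroup N -> normal_sub N -> h_quotient_R2 N ->
      exists M : set (Hpt R), homogeneous_subgroup M /\ complementary N M).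
Proof.
split; first exact: part1.
move=> N _ _ [phi [hom surj ker]].
have [A0 [A1 [A2 [A3 [B0 [B1' [B2' [B3 hphi]]]]]]]] := phi_formula hom.
have [p hp] := surj (mk2 1 0).
have [q hq] := surj (mk2 0 1).
rewrite hphi in hp; rewrite hphi in hq.
case/mk2_inj: hp => hpA hpB; case/mk2_inj: hq => hqA hqB.
have [u0 [u1 [u2 [u3 hD]]]] := exists_u hpA hpB hqA hqB.
exists (Mc A0 A1 A2 A3 B0 B1' B2' B3 u0 u1 u2 u3); split.
  exact: Mc_homogeneous.
apply: Mc_complementary => // r.
rewrite ker hphi mk2_zero; split; first by case/mk2_inj.
by case=> -> ->.
Qed.
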